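(* Let $\lambda_1,\lambda_2$ be as in the context. For $K\in(-1,1)\setminus\{0\}$ let $b_K$ solve $b_K'(v)=\sqrt{\lambda_1^2-K(\lambda_1^2\cos^2 b_K(v)+\lambda_2^2\sin^2 b_K(v))}$, $b_K(0)=0$, let $W_K>0$ be the unique number with $b_K(W_K)=\pi$, let $x_{3,K}$ solve $x_{3,K}'(v)=\frac{\lambda_1\lambda_2K}{\lambda_1+b_K'(v)}$, $x_{3,K}(0)=0$, and let $\mathfrak{H}_K=X_K(\mathbb{C})\subset\widetilde{E(2)}$ be the helicoid given by $$X_K(u+iv)=\Big(\tfrac{1}{\lambda_1^2\lambda_2}\big(\tfrac{1}{\lambda_1}\cos x_{3,K}(v)\sin b_K(v)+\tfrac{1}{\lambda_2}\sin x_{3,K}(v)\cos b_K(v)\big)x_{3,K}'(v)\sinh(-\lambda_1u),\ \tfrac{1}{\lambda_1^2\lambda_2}\big(\tfrac{1}{\lambda_1}\sin x_{3,K}(v)\sin b_K(v)-\tfrac{1}{\lambda_2}\cos x_{3,K}(v)\cos b_K(v)\big)x_{3,K}'(v)\sinh(-\lambda_1u),\ x_{3,K}(v)\Big).$$ Then for every real number $T\neq0$ there exists $K\in(-1,1)\setminus\{0\}$ such that $\mathfrak{H}_K$ has period $T$, i.e. $2|x_{3,K}(W_K)|=|T|$, so that $\mathfrak{H}_K$ is invariant under left multiplication by $(0,0,T)$.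
   Context: $\widetilde{E(2)}$ is $\mathbb{R}^3$ with coordinates $(x_1,x_2,x_3)$ and group law $(a_1,b_1,c_1)*(a_2,b_2,c_2)=(a_1+a_2\cos c_1-b_2\sin c_1,\ b_1+a_2\sin c_1+b_2\cos c_1,\ c_1+c_2)$, with the left-invariant metric $\lambda_1^2(\cos x_3\,dx_1+\sin x_3\,dx_2)^2+\lambda_2^2(-\sin x_3\,dx_1+\cos x_3\,dx_2)^2+\frac{1}{\lambda_1^2\lambda_2^2}dx_3^2$, where either $\lambda_1>\lambda_2>0$ or $\lambda_1=\lambda_2=1$. The helicoid $\mathfrak{H}_K$ satisfies $(0,0,2x_{3,K}(W_K))*X_K(u+iv)=X_K(u+i(v+2W_K))$; its period is the translation length $2x_{3,K}(W_K)$, and since $(0,0,-t)$ is the inverse of $(0,0,t)$, invariance under $(0,0,t)$ is equivalent to invariance under $(0,0,-t)$. *)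

(* Defs.v *)
From Stdlib Require Import Reals.
Open Scope R_scope.

Definition admissible_lambdas (l1 l2 : R) : Prop :=
  (l1 > l2 /\ l2 > 0) \/ (l1 = 1 /\ l2 = 1).

Definition bK_rhs (l1 l2 K y : R) : R :=
  sqrt (l1 ^ 2 - K * (l1 ^ 2 * (cos y) ^ 2 + l2 ^ 2 * (sin y) ^ 2)).

Definition is_bK (l1 l2 K : R) (b : R -> R) : Prop :=
  b 0 = 0 /\ forall v, derivable_pt_lim b v (bK_rhs l1 l2 K (b v)).

Definition is_x3K (l1 l2 K : R) (b x3 : R -> R) : Prop :=
  x3 0 = 0 /\
  forall v, derivable_pt_lim x3 v (l1 * l2 * K / (l1 + bK_rhs l1 l2 K (b v))).

(* W > 0 with b(W) = pi (unique, since b is strictly increasing). *)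
Definition is_WK (b : R -> R) (W : R) : Prop := W > 0 /\ b W = PI.

Definition helicoid_data (l1 l2 K : R) (b x3 : R -> R) (W : R) : Prop :=
  is_bK l1 l2 K b /\ is_x3K l1 l2 K b x3 /\ is_WK b W.

(* Main.v *)
Require Import Defs.
From Stdlib Require Import Reals Lra Psatz Ranalysis5.
From Coquelicot Require Import Coquelicot.
Open Scope R_scope.

Definition Fq (l1 l2 K y : R) := l1 ^ 2 - K * (l1 ^ 2 * (cos y) ^ 2 + l2 ^ 2 * (sin y) ^ 2).

Lemma Fq_bounds l1 l2 K y : 0 < l2 -> l2 <= l1 -> 0 <= K <= 1 ->
  (1 - K) * l1 ^ 2 <= Fq l1 l2 K y <= l1 ^ 2.
Proof.
  intros. unfold Fq. pose proof (sin2_cos2 y). unfold Rsqr in H2.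
  pose proof (pow2_ge_0 (sin y)). pose proof (pow2_ge_0 (cos y)).
  assert (l2^2 <= l1^2) by nra.
  assert (Hs : sin y ^ 2 + cos y ^ 2 = 1) by (simpl; lra).
  assert (Hg : l2^2 <= l1 ^ 2 * cos y ^ 2 + l2 ^ 2 * sin y ^ 2 <= l1^2).
  { split; nra. }
  split; nra.
Qed.

Lemma f_bounds l1 l2 K y : 0 < l2 -> l2 <= l1 -> 0 <= K < 1 ->
  (1 - K) * l1 <= bK_rhs l1 l2 K y <= l1 /\ 0 < bK_rhs l1 l2 K y.
Proof.
  intros. destruct (Fq_bounds l1 l2 K y H H0 ltac:(lra)).
  unfold bK_rhs. fold (Fq l1 l2 K y).
  assert (0 < (1-K)*l1) by nra.
  split; [split|].
  - rewrite <- (sqrt_pow2 ((1-K)*l1)) by lra. apply sqrt_le_1_alt.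
    assert (((1-K)*l1)^2 <= (1-K)*l1^2).
    { replace (((1-K)*l1)^2) with ((1-K)*((1-K)*l1^2)) by ring.
      assert (0 <= (1-K) * l1^2) by (apply Rmult_le_pos; nra).
      nra. }
    lra.
  - apply Rle_trans with (sqrt (l1^2)). apply sqrt_le_1_alt. lra. rewrite sqrt_pow2; lra.
  - apply sqrt_lt_R0. nra.
Qed.

Definition hK (l1 l2 K y : R) := l1 * l2 * K / ((l1 + bK_rhs l1 l2 K y) * bK_rhs l1 l2 K y).

Lemma Fq_pos l1 l2 K y : 0 < l2 -> l2 <= l1 -> 0 <= K < 1 -> 0 < Fq l1 l2 K y.
Proof.
  intros. destruct (Fq_bounds l1 l2 K y H H0 ltac:(lra)).
  assert (0 < (1-K)*l1^2) by (apply Rmult_lt_0_compat; nra). lra.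
Qed.

Ltac side_tac l1 l2 K y H H0 H1 :=
  let A := fresh in let B := fresh in let C := fresh in
  pose proof (Fq_pos l1 l2 K y H H0 H1) as A;
  pose proof (f_bounds l1 l2 K y H H0 H1) as B;
  unfold bK_rhs, Fq in A, B |- *; simpl in A, B |- *; unfold Rminus in A, B |- *;
  repeat split; try lra;
  try (apply Rmult_integral_contrapositive; split; lra).

Lemma hK_derive l1 l2 K y : 0 < l2 -> l2 <= l1 -> 0 <= K < 1 -> ex_derive (hK l1 l2 K) y.
Proof.
  intros. unfold hK, bK_rhs. auto_derive. side_tac l1 l2 K y H H0 H1.
Qed.

Lemma invf_derive l1 l2 K y : 0 < l2 -> l2 <= l1 -> 0 <= K < 1 ->
  ex_derive (fun y => / bK_rhs l1 l2 K y) y.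
Proof.
  intros. unfold bK_rhs. auto_derive. side_tac l1 l2 K y H H0 H1.
Qed.

Lemma hK_exRInt l1 l2 K a b : 0 < l2 -> l2 <= l1 -> 0 <= K < 1 -> ex_RInt (hK l1 l2 K) a b.
Proof.
  intros. apply (ex_RInt_continuous (V:=R_CompleteNormedModule)). intros. apply (ex_derive_continuous (K:=R_AbsRing) (V:=R_NormedModule)). apply hK_derive; auto.
Qed.

Lemma sqrt_sq_eq x : 0 <= x -> sqrt x * sqrt x = x.
Proof. apply sqrt_sqrt. Qed.

Lemma hK_alt l1 l2 K y : 0 < l2 -> l2 <= l1 -> 0 <= K < 1 ->
  hK l1 l2 K y = l1 * l2 * (l1 - bK_rhs l1 l2 K y) /
     ((l1 ^ 2 * (cos y) ^ 2 + l2 ^ 2 * (sin y) ^ 2) * bK_rhs l1 l2 K y).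
Proof.
  intros. pose proof (f_bounds l1 l2 K y H H0 H1) as [[Hm HM] Hp].
  pose proof (Fq_pos l1 l2 K y H H0 H1) as HF.
  assert (HS : bK_rhs l1 l2 K y * bK_rhs l1 l2 K y = Fq l1 l2 K y).
  { unfold bK_rhs. apply sqrt_sqrt. unfold Fq in *; lra. }
  assert (Hs : sin y ^ 2 + cos y ^ 2 = 1) by (pose proof (sin2_cos2 y); unfold Rsqr in *; simpl; lra).
  assert (Hg : l2^2 <= l1 ^ 2 * cos y ^ 2 + l2 ^ 2 * sin y ^ 2).
  { assert (l2^2 <= l1^2) by nra. pose proof (pow2_ge_0 (cos y)). nra. }
  assert (0 < l2^2) by nra.
  unfold hK. set (f := bK_rhs l1 l2 K y) in *. set (g := l1 ^ 2 * cos y ^ 2 + l2 ^ 2 * sin y ^ 2) in *.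
  replace (l1 * l2 * K) with (l1 * l2 * ((l1^2 - f*f)/g)).
  2:{ rewrite HS. unfold Fq. fold g. field. lra. }
  field. repeat split; lra.
Qed.

Lemma hK_diff l1 l2 K K' y : 0 < l2 -> l2 <= l1 -> 0 <= K < 1 -> 0 <= K' < 1 ->
  hK l1 l2 K y - hK l1 l2 K' y =
  l1^2 * l2 * (K - K') / (bK_rhs l1 l2 K y * bK_rhs l1 l2 K' y * (bK_rhs l1 l2 K y + bK_rhs l1 l2 K' y)).
Proof.
  intros. rewrite (hK_alt l1 l2 K), (hK_alt l1 l2 K'); auto.
  pose proof (f_bounds l1 l2 K y H H0 H1) as [[Hm HM] Hp].
  pose proof (f_bounds l1 l2 K' y H H0 H2) as [[Hm' HM'] Hp'].
  pose proof (Fq_pos l1 l2 K y H H0 H1) as HF.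
  pose proof (Fq_pos l1 l2 K' y H H0 H2) as HF'.
  assert (HS : bK_rhs l1 l2 K y * bK_rhs l1 l2 K y = Fq l1 l2 K y).
  { unfold bK_rhs. apply sqrt_sqrt. unfold Fq in *; lra. }
  assert (HS' : bK_rhs l1 l2 K' y * bK_rhs l1 l2 K' y = Fq l1 l2 K' y).
  { unfold bK_rhs. apply sqrt_sqrt. unfold Fq in *; lra. }
  assert (Hs : sin y ^ 2 + cos y ^ 2 = 1) by (pose proof (sin2_cos2 y); unfold Rsqr in *; simpl; lra).
  assert (Hg : l2^2 <= l1 ^ 2 * cos y ^ 2 + l2 ^ 2 * sin y ^ 2).
  { assert (l2^2 <= l1^2) by nra. pose proof (pow2_ge_0 (cos y)). nra. }
  assert (0 < l2^2) by nra.
  set (f := bK_rhs l1 l2 K y) in *. set (f' := bK_rhs l1 l2 K' y) in *.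
  set (g := l1 ^ 2 * cos y ^ 2 + l2 ^ 2 * sin y ^ 2) in *.
  replace (K - K') with ((f' * f' - f * f) / g).
  2:{ rewrite HS, HS'. unfold Fq. fold g. field. lra. }
  field. repeat split; lra.
Qed.

Definition Cl (l1 l2 a : R) := l1^2 * l2 / (2 * ((1 - a) * l1)^3).

Lemma hK_lip l1 l2 a K K' y : 0 < l2 -> l2 <= l1 -> 0 <= K <= a -> 0 <= K' <= a -> a < 1 ->
  Rabs (hK l1 l2 K y - hK l1 l2 K' y) <= Cl l1 l2 a * Rabs (K - K').
Proof.
  intros. rewrite hK_diff by (auto; lra).
  pose proof (f_bounds l1 l2 K y H H0 ltac:(lra)) as [[Hm HM] Hp].
  pose proof (f_bounds l1 l2 K' y H H0 ltac:(lra)) as [[Hm' HM'] Hp'].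
  set (f := bK_rhs l1 l2 K y) in *. set (f' := bK_rhs l1 l2 K' y) in *.
  set (m := (1 - a) * l1).
  assert (Hm0 : 0 < m) by (unfold m; nra).
  assert (m <= f) by (unfold m; nra). assert (m <= f') by (unfold m; nra).
  assert (HD : 2 * m^3 <= f * f' * (f + f')).
  { assert (m*m <= f*f') by (apply Rmult_le_compat; lra).
    replace (2*m^3) with ((m*m)*(2*m)) by ring. apply Rmult_le_compat; nra. }
  assert (0 < 2 * m^3) by (apply Rmult_lt_0_compat; [lra | apply pow_lt; lra]).
  rewrite Rabs_div by nra. rewrite Rabs_mult. rewrite (Rabs_pos_eq (l1^2*l2)) by (apply Rmult_le_pos; nra).
  rewrite (Rabs_pos_eq (f * f' * (f + f'))) by nra.
  unfold Cl. fold m.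
  pose proof (Rabs_pos (K - K')).
  apply Rle_trans with (l1^2*l2*Rabs(K-K') / (2*m^3)).
  - unfold Rdiv. apply Rmult_le_compat_l.
    + apply Rmult_le_pos; [apply Rmult_le_pos|]; nra.
    + apply Rinv_le_contravar; lra.
  - right. field. lra.
Qed.

Definition Phi (l1 l2 K : R) := RInt (hK l1 l2 K) 0 PI.

Lemma Phi_lip l1 l2 a K K' : 0 < l2 -> l2 <= l1 -> 0 <= K <= a -> 0 <= K' <= a -> a < 1 ->
  Rabs (Phi l1 l2 K - Phi l1 l2 K') <= PI * (Cl l1 l2 a * Rabs (K - K')).
Proof.
  intros. unfold Phi.
  assert (E : RInt (fun y => hK l1 l2 K y - hK l1 l2 K' y) 0 PI =
              RInt (hK l1 l2 K) 0 PI - RInt (hK l1 l2 K') 0 PI).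
  { apply (RInt_minus (V:=R_CompleteNormedModule)); apply hK_exRInt; auto; lra. }
  rewrite <- E. replace PI with (PI - 0) at 2 by ring.
  apply abs_RInt_le_const.
  - pose proof PI_RGT_0; lra.
  - apply (ex_RInt_minus (V:=R_NormedModule)); apply hK_exRInt; auto; lra.
  - intros. apply hK_lip with (a := a); auto.
Qed.

Lemma Phi0 l1 l2 : Phi l1 l2 0 = 0.
Proof.
  unfold Phi. rewrite (RInt_ext _ (fun _ => 0)).
  - rewrite RInt_const. exact (scal_zero_r (PI - 0)).
  - intros. unfold hK. rewrite Rmult_0_r. unfold Rdiv. rewrite Rmult_0_l. reflexivity.
Qed.

Definition clamp (a x : R) := Rmax 0 (Rmin a x).

Lemma clamp_lip a x y : Rabs (clamp a x - clamp a y) <= Rabs (x - y).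
Proof.
  unfold clamp, Rmax, Rmin. repeat destruct Rle_dec; unfold Rabs; repeat destruct Rcase_abs; lra.
Qed.

Lemma clamp_range a x : 0 <= a -> 0 <= clamp a x <= a.
Proof. intros. unfold clamp, Rmax, Rmin. repeat destruct Rle_dec; lra. Qed.

Lemma lip_cont (F : R -> R) L : 0 <= L -> (forall x y, Rabs (F x - F y) <= L * Rabs (x - y)) ->
  continuity F.
Proof.
  intros HL H x. unfold continuity_pt, continue_in, limit1_in, limit_in. simpl.
  intros eps Heps. exists (eps / (L + 1)). split.
  - apply Rdiv_lt_0_compat; lra.
  - intros y [_ Hy]. unfold R_dist in *.
    eapply Rle_lt_trans. apply H.
    apply Rle_lt_trans with ((L+1) * Rabs (y - x)).
    + pose proof (Rabs_pos (y - x)). nra.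
    + replace eps with ((L+1) * (eps / (L+1))) by (field; lra).
      apply Rmult_lt_compat_l; lra.
Qed.

Lemma Psi_cont l1 l2 a : 0 < l2 -> l2 <= l1 -> 0 <= a < 1 ->
  continuity (fun K => Phi l1 l2 (clamp a K)).
Proof.
  intros. apply lip_cont with (L := PI * Cl l1 l2 a).
  - unfold Cl. pose proof PI_RGT_0. assert (0 < (1-a)*l1) by nra.
    apply Rmult_le_pos; [lra|]. unfold Rdiv. apply Rmult_le_pos.
    apply Rmult_le_pos; nra. left. apply Rinv_0_lt_compat. apply Rmult_lt_0_compat; [lra|]. apply pow_lt; lra.
  - intros. eapply Rle_trans. apply Phi_lip with (a := a); auto; try apply clamp_range; lra.
    assert (0 <= Cl l1 l2 a).
    { unfold Cl. assert (0 < (1-a)*l1) by nra.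
      unfold Rdiv. apply Rmult_le_pos. apply Rmult_le_pos; nra. left. apply Rinv_0_lt_compat.
      apply Rmult_lt_0_compat; [lra|]. apply pow_lt; lra. }
    pose proof PI_RGT_0. pose proof (clamp_lip a x y).
    rewrite <- Rmult_assoc. apply Rmult_le_compat_l; nra.
Qed.

Lemma exd_cont (f: R->R) x : ex_derive f x -> continuous f x.
Proof. apply (ex_derive_continuous (K:=R_AbsRing) (V:=R_NormedModule)). Qed.

Lemma div_le_div a b c d : 0 < b -> 0 < d -> a * d <= c * b -> a / b <= c / d.
Proof.
  intros. unfold Rdiv. apply Rmult_le_reg_r with (b*d). nra.
  replace (a*/b*(b*d)) with (a*d) by (field; lra).
  replace (c*/d*(b*d)) with (c*b) by (field; lra). lra.
Qed.

Lemma Afun_derive l1 l2 s y : 0 < l1 -> 0 < s ->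
  is_derive (fun y => l2/4 * (ln (l1*y + sqrt ((l1*y)^2 + s^2)) / l1)) y
            (l2/4 * / sqrt ((l1*y)^2 + s^2)).
Proof.
  intros. assert (HQ : 0 < (l1*y)^2 + s^2) by (pose proof (pow2_ge_0 (l1*y)); pose proof (pow_lt s 2 H0); lra).
  assert (HA : Rabs (l1*y) < sqrt ((l1*y)^2 + s^2)).
  { rewrite <- sqrt_Rsqr_abs. apply sqrt_lt_1_alt. split. apply Rle_0_sqr. unfold Rsqr.
    pose proof (pow_lt s 2 H0). simpl in *. lra. }
  pose proof (Rabs_maj2 (l1*y)).
  pose proof (sqrt_lt_R0 _ HQ).
  auto_derive.
  - simpl in *. repeat split; lra.
  - replace (l1 * y * (l1 * y * 1) + s * (s * 1)) with ((l1*y)^2 + s^2) by ring.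
    set (S := sqrt ((l1*y)^2 + s^2)) in *.
    field. repeat split; lra.
Qed.

Lemma Phi_big l1 l2 t : 0 < l2 -> l2 <= l1 -> 0 < t ->
  exists K1, 0 < K1 < 1 /\ t <= Phi l1 l2 K1.
Proof.
  intros Hl2 Hl Ht.
  assert (Hl1 : 0 < l1) by lra.
  pose proof PI_RGT_0 as HPI.
  set (s := Rmin (l1*PI*exp(-(4*l1*t/l2))) (l1/2)).
  assert (Hs0 : 0 < s).
  { unfold s, Rmin. destruct Rle_dec; [|lra].
    apply Rmult_lt_0_compat; [nra | apply exp_pos]. }
  assert (Hs1 : s <= l1/2) by (unfold s; apply Rmin_r).
  assert (Hs2 : s <= l1*PI*exp(-(4*l1*t/l2))) by (unfold s; apply Rmin_l).
  set (K1 := 1 - s^2/l1^2).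
  assert (HK1 : 3/4 <= K1 < 1).
  { unfold K1. split.
    - assert (s^2/l1^2 <= 1/4). { apply div_le_div; try nra. }
      lra.
    - assert (0 < s^2/l1^2) by (apply Rdiv_lt_0_compat; apply pow_lt; lra). lra. }
  exists K1. split; [lra|].
  set (Q := fun y => (l1*y)^2 + s^2).
  assert (HQ : forall y, 0 < Q y) by (intros; unfold Q; pose proof (pow2_ge_0 (l1*y)); pose proof (pow_lt s 2 Hs0); lra).
  set (A := fun y => l2/4 * (ln (l1*y + sqrt ((l1*y)^2 + s^2)) / l1)).
  set (lo := fun y => l2/4 * / sqrt ((l1*y)^2 + s^2)).
  assert (HI : is_RInt lo 0 PI (A PI - A 0)).
  { apply (is_RInt_derive (V:=R_CompleteNormedModule) A lo).
    - intros. apply Afun_derive; lra.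
    - intros. apply exd_cont. unfold lo. auto_derive.
      specialize (HQ x). unfold Q in HQ. pose proof (sqrt_lt_R0 _ HQ). simpl in *. repeat split; lra. }
  assert (Hlow : A PI - A 0 <= Phi l1 l2 K1).
  { replace (A PI - A 0) with (RInt lo 0 PI) by (apply is_RInt_unique; exact HI).
    unfold Phi. apply RInt_le.
    - lra.
    - exists (A PI - A 0). exact HI.
    - apply hK_exRInt; auto; lra.
    - intros y Hy. unfold lo.
      pose proof (f_bounds l1 l2 K1 y Hl2 Hl ltac:(lra)) as [[Hm HM] Hp].
      pose proof (sin_lt_x y ltac:(lra)). pose proof (sin_ge_0 y ltac:(lra) ltac:(lra)).
      assert (HF : Fq l1 l2 K1 y <= (l1*y)^2 + s^2).
      { unfold Fq. assert (Hs : sin y ^ 2 + cos y ^ 2 = 1) by (pose proof (sin2_cos2 y); unfold Rsqr in *; simpl; lra).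
        assert (E : (1 - K1) * l1^2 = s^2) by (unfold K1; field; lra).
        assert (sin y ^2 <= y^2) by (simpl; nra).
        pose proof (pow2_ge_0 (sin y)).
        assert (K1 * (l1 ^ 2 * cos y ^ 2 + l2 ^ 2 * sin y ^ 2) >= K1 * (l1^2 * (1 - sin y ^2))).
        { apply Rle_ge. apply Rmult_le_compat_l; [lra|]. pose proof (pow2_ge_0 l2). nra. }
        assert (K1 * (l1^2 * sin y ^2) <= l1^2 * y^2).
        { pose proof (pow2_ge_0 l1). nra. }
        replace ((l1*y)^2) with (l1^2*y^2) by ring. nra. }
      set (f := bK_rhs l1 l2 K1 y) in *.
      assert (HfS : f <= sqrt ((l1*y)^2 + s^2)).
      { unfold f, bK_rhs. apply sqrt_le_1_alt. unfold Fq in HF. exact HF. }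
      set (S := sqrt ((l1*y)^2 + s^2)) in *.
      unfold hK. fold f.
      replace (l2 / 4 * / S) with (l2 / (4 * S)) by (field; lra).
      apply div_le_div; [nra | nra |].
      assert ((l1 + f) * f <= (2*l1) * S) by (apply Rmult_le_compat; lra).
      assert (l2 * ((l1 + f) * f) <= l2 * ((2*l1) * S)) by (apply Rmult_le_compat_l; lra).
      assert (0 <= l1 * l2 * S) by (apply Rmult_le_pos; [apply Rmult_le_pos|]; lra).
      nra. }
  assert (Hval : t <= A PI - A 0).
  { unfold A. replace (l1 * 0) with 0 by ring. replace ((0:R)^2 + s^2) with (s^2) by ring.
    rewrite sqrt_pow2 by lra. replace (0 + s) with s by ring.
    assert (H1 : ln (l1 * PI) <= ln (l1 * PI + sqrt ((l1 * PI) ^ 2 + s ^ 2))).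
    { apply ln_le. nra. pose proof (sqrt_pos ((l1 * PI) ^ 2 + s ^ 2)). lra. }
    assert (H2 : ln s <= ln (l1 * PI) - 4 * l1 * t / l2).
    { apply Rle_trans with (ln (l1*PI*exp(-(4*l1*t/l2)))).
      apply ln_le; lra. rewrite ln_mult by (try apply exp_pos; nra). rewrite ln_exp. lra. }
    set (X := ln (l1 * PI + sqrt ((l1 * PI) ^ 2 + s ^ 2))) in *.
    replace (l2 / 4 * (X / l1) - l2 / 4 * (ln s / l1)) with (l2/(4*l1) * (X - ln s)) by (field; lra).
    assert (4 * l1 * t / l2 <= X - ln s) by lra.
    apply Rle_trans with (l2 / (4 * l1) * (4 * l1 * t / l2)).
    right. field. lra.
    apply Rmult_le_compat_l; [|lra]. left. apply Rdiv_lt_0_compat; lra. }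
  lra.
Qed.

Lemma P_derive l1 l2 K y : 0 < l2 -> l2 <= l1 -> 0 <= K < 1 ->
  is_derive (fun y => RInt (hK l1 l2 K) 0 y) y (hK l1 l2 K y).
Proof.
  intros. apply (is_derive_RInt (V:=R_CompleteNormedModule) (hK l1 l2 K) (fun y => RInt (hK l1 l2 K) 0 y) 0 y).
  - apply filter_forall. intros x. exact (RInt_correct _ _ _ (hK_exRInt l1 l2 K 0 x H H0 H1)).
  - apply exd_cont. apply hK_derive; auto.
Qed.

Lemma comp_derive l1 l2 K b v : 0 < l2 -> l2 <= l1 -> 0 <= K < 1 ->
  derivable_pt_lim b v (bK_rhs l1 l2 K (b v)) ->
  is_derive (fun v => RInt (hK l1 l2 K) 0 (b v)) v (l1 * l2 * K / (l1 + bK_rhs l1 l2 K (b v))).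
Proof.
  intros H H0 H1 Hb.
  pose proof (f_bounds l1 l2 K (b v) H H0 H1) as [[Hm HM] Hp].
  replace (l1 * l2 * K / (l1 + bK_rhs l1 l2 K (b v))) with
     (scal (bK_rhs l1 l2 K (b v)) (hK l1 l2 K (b v))).
  - apply (is_derive_comp (fun y => RInt (hK l1 l2 K) 0 y) b v).
    + apply P_derive; auto.
    + apply is_derive_Reals. exact Hb.
  - unfold scal; simpl. unfold mult; simpl. unfold hK. field. lra.
Qed.

Lemma uniq_data l1 l2 K b x3 W : 0 < l2 -> l2 <= l1 -> 0 <= K < 1 ->
  helicoid_data l1 l2 K b x3 W -> x3 W = Phi l1 l2 K.
Proof.
  intros H H0 H1 [[Hb0 Hb] [[Hx0 Hx] [HW HbW]]].
  set (G := fun v => x3 v - RInt (hK l1 l2 K) 0 (b v)).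
  assert (HG : forall v, is_derive G v 0).
  { intros v. set (c := l1 * l2 * K / (l1 + bK_rhs l1 l2 K (b v))).
    assert (Hd : is_derive G v (minus c c)).
    { unfold G. apply (is_derive_minus (K:=R_AbsRing) (V:=R_NormedModule)).
      - apply is_derive_Reals. apply Hx.
      - apply comp_derive; auto. }
    rewrite minus_eq_zero in Hd. exact Hd. }
  assert (HI : is_RInt (fun _ => 0) 0 W (minus (G W) (G 0))).
  { apply (is_RInt_derive (V:=R_CompleteNormedModule) G (fun _ => 0)).
    - intros. apply HG.
    - intros. apply (continuous_const (U:=R_UniformSpace) (V:=R_UniformSpace)). }
  assert (HI2 : is_RInt (fun _ => 0) 0 W (scal (W - 0) 0)) by apply (is_RInt_const (V:=R_NormedModule)).
  pose proof (filterlim_locally_unique _ _ _ HI HI2) as E.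
  unfold scal, minus, plus, opp in E; simpl in E. unfold mult in E; simpl in E.
  unfold G in E. rewrite Hb0, Hx0, HbW in E. rewrite RInt_point in E. unfold Phi.
  unfold zero in E; simpl in E. lra.
Qed.

Lemma invf_exRInt l1 l2 K a b : 0 < l2 -> l2 <= l1 -> 0 <= K < 1 ->
  ex_RInt (fun y => / bK_rhs l1 l2 K y) a b.
Proof.
  intros. apply (ex_RInt_continuous (V:=R_CompleteNormedModule)). intros.
  apply exd_cont. apply invf_derive; auto.
Qed.

Lemma exist_data l1 l2 K : 0 < l2 -> l2 <= l1 -> 0 <= K < 1 ->
  exists b x3 W, helicoid_data l1 l2 K b x3 W.
Proof.
  intros H H0 H1. assert (Hl1 : 0 < l1) by lra.
  set (V := (fun y => RInt (fun s => / bK_rhs l1 l2 K s) 0 y) : R -> R).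
  assert (HVd : forall y, is_derive V y (/ bK_rhs l1 l2 K y)).
  { intros y. apply (is_derive_RInt (V:=R_CompleteNormedModule) (fun s => / bK_rhs l1 l2 K s) V 0 y).
    - apply filter_forall. intros x. exact (RInt_correct _ _ _ (invf_exRInt l1 l2 K 0 x H H0 H1)).
    - apply exd_cont. apply invf_derive; auto. }
  assert (HV0 : V 0 = 0) by (unfold V; rewrite RInt_point; reflexivity).
  assert (Hmono : forall y1 y2, y1 <= y2 -> (y2 - y1) / l1 <= V y2 - V y1).
  { intros y1 y2 Hy.
    assert (E : V y2 - V y1 = RInt (fun s => / bK_rhs l1 l2 K s) y1 y2).
    { unfold V. rewrite <- (RInt_Chasles (V:=R_CompleteNormedModule) (fun s => / bK_rhs l1 l2 K s) 0 y1 y2)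
        by (apply invf_exRInt; auto).
      unfold plus; simpl. ring. }
    rewrite E.
    replace ((y2 - y1) / l1) with (RInt (fun _ => / l1) y1 y2).
    2:{ rewrite RInt_const. unfold scal; simpl; unfold mult; simpl. unfold Rdiv. reflexivity. }
    apply RInt_le; auto.
    - apply (ex_RInt_const (V:=R_NormedModule)).
    - apply invf_exRInt; auto.
    - intros x _. pose proof (f_bounds l1 l2 K x H H0 H1) as [[Hm HM] Hp].
      apply Rinv_le_contravar; lra. }
  assert (Hinj : forall y1 y2, V y1 = V y2 -> y1 = y2).
  { intros y1 y2 E. destruct (Rtotal_order y1 y2) as [Hl|[He|Hg]]; auto.
    - pose proof (Hmono y1 y2 ltac:(lra)). assert (0 < (y2 - y1)/l1) by (apply Rdiv_lt_0_compat; lra). lra.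
    - pose proof (Hmono y2 y1 ltac:(lra)). assert (0 < (y1 - y2)/l1) by (apply Rdiv_lt_0_compat; lra). lra. }
  assert (HVc : continuity V).
  { intros y. apply continuity_pt_filterlim. apply exd_cont. exists (/ bK_rhs l1 l2 K y). apply HVd. }
  assert (surj : forall v, {y | V y = v}).
  { intros v.
    assert (Ha : V (- Rabs v * l1) <= - Rabs v).
    { pose proof (Hmono (- Rabs v * l1) 0 ltac:(pose proof (Rabs_pos v); nra)).
      replace ((0 - - Rabs v * l1) / l1) with (Rabs v) in H2 by (field; lra). lra. }
    assert (Hb : Rabs v <= V (Rabs v * l1)).
    { pose proof (Hmono 0 (Rabs v * l1) ltac:(pose proof (Rabs_pos v); nra)).
      replace ((Rabs v * l1 - 0) / l1) with (Rabs v) in H2 by (field; lra). lra. }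
    destruct (IVT_gen V (- Rabs v * l1) (Rabs v * l1) v HVc) as [y [_ Hy]].
    - split.
      + apply Rle_trans with (V (- Rabs v * l1)). apply Rmin_l. pose proof (Rabs_maj2 v). lra.
      + apply Rle_trans with (V (Rabs v * l1)). pose proof (Rle_abs v). lra. apply Rmax_r.
    - exists y. exact Hy. }
  set (b := fun v => proj1_sig (surj v)).
  assert (HbV : forall v, V (b v) = v) by (intros; unfold b; apply proj2_sig).
  assert (HVb : forall y, b (V y) = y) by (intros; apply Hinj; rewrite HbV; reflexivity).
  assert (Hbmono : forall v1 v2, v1 <= v2 -> b v1 <= b v2).
  { intros v1 v2 Hv. destruct (Rle_dec (b v1) (b v2)) as [|Hn]; auto.
    pose proof (Hmono (b v2) (b v1) ltac:(lra)). rewrite !HbV in H2.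
    assert (0 < (b v1 - b v2)/l1) by (apply Rdiv_lt_0_compat; lra). lra. }
  assert (Hblip : forall v1 v2, Rabs (b v1 - b v2) <= l1 * Rabs (v1 - v2)).
  { intros v1 v2. destruct (Rle_dec v1 v2).
    - pose proof (Hbmono v1 v2 r). pose proof (Hmono (b v1) (b v2) H2). rewrite !HbV in H3.
      apply Rmult_le_compat_l with (r := l1) in H3; [|lra].
      replace (l1 * ((b v2 - b v1) / l1)) with (b v2 - b v1) in H3 by (field; lra).
      rewrite Rabs_minus_sym. rewrite (Rabs_minus_sym v1). rewrite !Rabs_right by lra. lra.
    - pose proof (Hbmono v2 v1 ltac:(lra)). pose proof (Hmono (b v2) (b v1) H2). rewrite !HbV in H3.
      apply Rmult_le_compat_l with (r := l1) in H3; [|lra].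
      replace (l1 * ((b v1 - b v2) / l1)) with (b v1 - b v2) in H3 by (field; lra).
      rewrite !Rabs_right by lra. lra. }
  assert (Hbc : continuity b) by (apply lip_cont with (L := l1); [lra | exact Hblip]).
  assert (Hbd : forall v, derivable_pt_lim b v (bK_rhs l1 l2 K (b v))).
  { intros v.
    pose (Prf := fun a (_ : b (v-1) <= a <= b (v+1)) =>
       exist (fun l => derivable_pt_abs V a l) (/ bK_rhs l1 l2 K a) (proj1 (is_derive_Reals _ _ _) (HVd a))).
    assert (Hincr : b (v-1) <= b v <= b (v+1)) by (split; apply Hbmono; lra).
    pose proof (f_bounds l1 l2 K (b v) H H0 H1) as [[Hm HM] Hp].
    assert (Hne : derive_pt V (b v) (Prf (b v) Hincr) <> 0).
    { change (derive_pt V (b v) (Prf (b v) Hincr)) with (/ bK_rhs l1 l2 K (b v)).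
      apply Rinv_neq_0_compat. lra. }
    pose proof (derivable_pt_lim_recip_interv V b (v-1) (v+1) v Prf (Hbc v) ltac:(lra) ltac:(lra) Hincr
                  (fun x _ => HbV x) Hne) as D.
    change (derive_pt V (b v) (Prf (b v) Hincr)) with (/ bK_rhs l1 l2 K (b v)) in D.
    replace (1 / / bK_rhs l1 l2 K (b v)) with (bK_rhs l1 l2 K (b v)) in D by (field; lra).
    exact D. }
  exists b, (fun v => RInt (hK l1 l2 K) 0 (b v)), (V PI).
  assert (Hb0 : b 0 = 0) by (pose proof (HVb 0) as E; rewrite HV0 in E; exact E).
  split; [|split].
  - split; auto.
  - split.
    + cbv beta. rewrite Hb0. rewrite RInt_point. reflexivity.
    + intros v. apply is_derive_Reals. apply comp_derive; auto.
  - split.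
    + pose proof (Hmono 0 PI ltac:(pose proof PI_RGT_0; lra)). rewrite HV0 in H2.
      assert (0 < (PI - 0)/l1) by (apply Rdiv_lt_0_compat; pose proof PI_RGT_0; lra). lra.
    + apply HVb.
Qed.

Lemma clamp_id a x : 0 <= x <= a -> clamp a x = x.
Proof. intros. unfold clamp, Rmax, Rmin. repeat destruct Rle_dec; lra. Qed.

Theorem proposition4p4 (l1 l2 : R) (Hl : admissible_lambdas l1 l2)
  (T : R) (HT : T <> 0) :
  exists K : R, -1 < K < 1 /\ K <> 0 /\
    (exists (b x3 : R -> R) (W : R), helicoid_data l1 l2 K b x3 W) /\
    (forall (b x3 : R -> R) (W : R), helicoid_data l1 l2 K b x3 W ->
       2 * Rabs (x3 W) = Rabs T).
Proof.
  assert (Hl' : 0 < l2 /\ l2 <= l1) by (destruct Hl as [[? ?]|[? ?]]; lra).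
  destruct Hl' as [Hl2 Hl1].
  set (t := Rabs T / 2).
  assert (Ht : 0 < t) by (unfold t; pose proof (Rabs_pos_lt T HT); lra).
  destruct (Phi_big l1 l2 t Hl2 Hl1 Ht) as [K1 [HK1 HtK1]].
  set (Psi := fun K => Phi l1 l2 (clamp K1 K)).
  assert (HK1' : 0 <= K1 < 1) by lra.
  assert (HPc : continuity Psi) by exact (Psi_cont l1 l2 K1 Hl2 Hl1 HK1').
  assert (HP0 : Psi 0 = 0).
  { unfold Psi. rewrite (clamp_id K1 0) by lra. apply Phi0. }
  assert (HP1 : Psi K1 = Phi l1 l2 K1).
  { unfold Psi. rewrite (clamp_id K1 K1) by lra. reflexivity. }
  destruct (IVT_gen Psi 0 K1 t HPc) as [x [Hx Hxt]].
  { rewrite HP0, HP1. split.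
    - apply Rle_trans with 0. apply Rmin_l. lra.
    - apply Rle_trans with (Phi l1 l2 K1). lra. apply Rmax_r. }
  rewrite Rmin_left in Hx by lra. rewrite Rmax_right in Hx by lra.
  unfold Psi in Hxt. rewrite clamp_id in Hxt by lra.
  assert (Hx0 : x <> 0).
  { intro E. rewrite E, Phi0 in Hxt. lra. }
  exists x. split; [lra|]. split; [exact Hx0|]. split.
  - apply exist_data; auto; lra.
  - intros b x3 W HD. rewrite (uniq_data l1 l2 x b x3 W) by (auto; lra).
    rewrite Hxt. unfold t. rewrite Rabs_right by (pose proof (Rabs_pos T); lra). field.
Qed.
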